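(* Let $f:[0,1]\to[0,1]$ be a continuous map with a unique fixed point $a$, and let $P$ be a (non-fixed) periodic orbit of $f$ with over-rotation pair $(p,q)$ and code $L:P\to\mathbb{R}$. If there exist $x,y\in P$ with $x>_a y$ but $L(x)>L(y)$, then there are integers $l\ge 0$ and $k\ge 1$ with $k<q$ and $\frac{l}{k}<\frac{p}{q}$ such that the over-rotation interval of $f$ satisfies $I_f\supset[\frac{l}{k},\frac12]$.
   Context: For a continuous interval map $f$ and a periodic orbit $P$ of period $q$ which is not a fixed point, let $2p$ be the number of points $x\in P$ such that $f(x)-x$ and $f^2(x)-f(x)$ have different signs; the over-rotation pair of $P$ is $orp(P)=(p,q)$ and its over-rotation number is $\rho(P)=p/q$. The over-rotation interval $I_f$ of $f$ is the closure of the set of over-rotation numbers of all non-fixed periodic orbits of $f$; it is an interval of the form $[r_f,\frac12]$. For $a$ the fixed point, write $x>_a y$ if $x<y<a$ or $x>y>a$ (i.e. $x,y$ lie on the same side of $a$ and $x$ is farther from $a$), and $x\ge_a y$ if $x\le y<a$ or $x\ge y>a$. Code: let $\rho=\rho(P)$ and let $\varphi:P\to\{0,1\}$ be $\varphi(y)=1$ if $y>a$ and $f(y)<a$, and $\varphi(y)=0$ otherwise. The code of $P$ is the function $L:P\to\mathbb{R}$ with $L(x_0)=0$ for the leftmost point $x_0$ of $P$ and $L(f(y))=L(y)+\rho-\varphi(y)$ for $y\in P$ (this is well defined since $\sum_{y\in P}\varphi(y)=p=q\rho$). *)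

(* Defs.v *)
From Stdlib Require Import Reals Lra Lia.
Open Scope R_scope.

Fixpoint iter (f : R -> R) (n : nat) (x : R) : R :=
  match n with O => x | S m => f (iter f m x) end.

Definition maps_unit (f : R -> R) : Prop :=
  forall x, 0 <= x <= 1 -> 0 <= f x <= 1.

Definition continuous_on_unit (f : R -> R) : Prop :=
  forall x, 0 <= x <= 1 -> forall eps, eps > 0 ->
    exists delta, delta > 0 /\
      forall y, 0 <= y <= 1 -> Rabs (y - x) < delta -> Rabs (f y - f x) < eps.

Definition periodic_pt (f : R -> R) (x : R) (q : nat) : Prop :=
  (1 <= q)%nat /\ iter f q x = x /\ (forall i, (0 < i < q)%nat -> iter f i x <> x).

Definition in_orbit (f : R -> R) (x : R) (q : nat) (y : R) : Prop :=
  exists i, (i < q)%nat /\ y = iter f i x.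

Definition sign_change (f : R -> R) (y : R) : nat :=
  if Rlt_dec ((f y - y) * (f (f y) - f y)) 0 then 1%nat else 0%nat.

(* number of points of the orbit P of x (period q) with a sign change;
   this equals 2p where (p,q) is the over-rotation pair of P *)
Fixpoint num_sc_aux (f : R -> R) (x : R) (n : nat) : nat :=
  match n with
  | O => O
  | S m => (num_sc_aux f x m + sign_change f (iter f m x))%nat
  end.
Definition num_sc (f : R -> R) (x : R) (q : nat) : nat := num_sc_aux f x q.

Definition orn (f : R -> R) (x : R) (q : nat) : R :=
  INR (num_sc f x q) / (2 * INR q).

(* r lies in the over-rotation interval I_f: the closure of the set of
   over-rotation numbers of all non-fixed periodic orbits of f on [0,1] *)
Definition in_orint (f : R -> R) (r : R) : Prop :=
  forall eps, eps > 0 ->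
    exists x q, 0 <= x <= 1 /\ periodic_pt f x q /\ (2 <= q)%nat /\
      Rabs (orn f x q - r) < eps.

Definition gt_a (a x y : R) : Prop := (x < y /\ y < a) \/ (x > y /\ y > a).

Definition phi (f : R -> R) (a y : R) : R :=
  if Rlt_dec a y then (if Rlt_dec (f y) a then 1 else 0) else 0.

Definition is_code (f : R -> R) (a x : R) (q : nat) (rho : R) (L : R -> R) : Prop :=
  (forall x0, in_orbit f x q x0 -> (forall y, in_orbit f x q y -> x0 <= y) -> L x0 = 0) /\
  (forall y, in_orbit f x q y -> L (f y) = L y + rho - phi f a y).

(* Main.v *)
From Stdlib Require Import Reals Lra Lia Classical List ZArith.
Require Import Defs.
Open Scope R_scope.

Lemma cont_eps (g : R -> R) : continuity g -> forall x eps, eps > 0 ->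
  exists d, d > 0 /\ forall y, Rabs (y - x) < d -> Rabs (g y - g x) < eps.
Proof.
  intros Hg x eps He. destruct (Hg x eps He) as [d [Hd H]].
  exists d; split; auto. intros y Hy.
  destruct (Req_dec_T y x) as [->|Hne].
  - rewrite Rminus_diag, Rabs_R0; lra.
  - apply (H y). split. split; [exact I| auto]. exact Hy.
Qed.

Lemma eps_cont (g : R -> R) : (forall x eps, eps > 0 ->
  exists d, d > 0 /\ forall y, Rabs (y - x) < d -> Rabs (g y - g x) < eps) -> continuity g.
Proof.
  intros H x eps He. destruct (H x eps He) as [d [Hd H']].
  exists d; split; auto. intros y [_ Hy]. apply H'. exact Hy.
Qed.

Definition clamp (y : R) : R := Rmax 0 (Rmin 1 y).

Lemma clamp_in y : 0 <= clamp y <= 1.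
Proof. unfold clamp, Rmax, Rmin. repeat destruct Rle_dec; lra. Qed.

Lemma clamp_id y : 0 <= y <= 1 -> clamp y = y.
Proof. intros. unfold clamp, Rmax, Rmin. repeat destruct Rle_dec; lra. Qed.

Lemma clamp_lip x y : Rabs (clamp y - clamp x) <= Rabs (y - x).
Proof.
  unfold clamp, Rmax, Rmin. repeat destruct Rle_dec;
  unfold Rabs; repeat destruct Rcase_abs; lra.
Qed.

Definition fcl (f : R -> R) (y : R) := f (clamp y).

Lemma fcl_cont f : continuous_on_unit f -> continuity (fcl f).
Proof.
  intros Hf. apply eps_cont. intros x eps He.
  destruct (Hf (clamp x) (clamp_in x) eps He) as [d [Hd H]].
  exists d; split; auto. intros y Hy. unfold fcl.
  apply H. apply clamp_in. eapply Rle_lt_trans. apply clamp_lip. exact Hy.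
Qed.

Lemma last_hit (g : R -> R) x1 x2 c : continuity g -> x1 < x2 -> g x1 <= c -> c < g x2 ->
  exists s, x1 <= s < x2 /\ g s = c /\ forall y, s < y <= x2 -> g y > c.
Proof.
  intros Hg H12 H1 H2.
  set (E := fun y => x1 <= y <= x2 /\ g y <= c).
  assert (Hb : bound E). { exists x2. intros y [Hy _]. lra. }
  assert (Hn : exists y, E y). { exists x1. split; lra. }
  destruct (completeness E Hb Hn) as [s [Hub Hlub]].
  assert (Hs1 : x1 <= s). { apply Hub. split; lra. }
  assert (Hs2 : s <= x2). { apply Hlub. intros y [Hy _]. lra. }
  assert (Hgs : g s <= c).
  { destruct (Rle_dec (g s) c) as [h|h]; auto. exfalso.
    destruct (cont_eps g Hg s (g s - c)) as [d [Hd Hd']]. lra.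
    assert (Hex : exists y, E y /\ s - d < y).
    { apply NNPP. intro Hno. assert (s <= s - d).
      { apply Hlub. intros y Ey. destruct (Rle_dec y (s - d)); auto.
        exfalso; apply Hno; exists y; split; auto; lra. } lra. }
    destruct Hex as [y [[Hy Hgy] Hy2]].
    assert (y <= s) by (apply Hub; split; auto).
    specialize (Hd' y). assert (Rabs (y - s) < d) by (unfold Rabs; destruct Rcase_abs; lra).
    specialize (Hd' H0). unfold Rabs in Hd'; destruct Rcase_abs in Hd'; lra. }
  assert (Hs2' : s < x2) by (destruct (Req_dec_T s x2); subst; lra).
  assert (Hgt : forall y, s < y <= x2 -> g y > c).
  { intros y Hy. destruct (Rle_dec (g y) c) as [h|h]; [|lra].
    assert (y <= s) by (apply Hub; split; lra). lra. }
  exists s. split; [lra|]. split; auto.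
  destruct (Rle_dec c (g s)) as [h|h]; [lra|]. exfalso.
  destruct (IVT (fun y => g y - c) s x2) as [z [Hz Hz']]; auto.
  { apply continuity_minus; auto. apply continuity_const. intros a b; auto. }
  lra. lra.
  destruct (Req_dec_T z s). subst; lra.
  assert (g z > c) by (apply Hgt; lra). lra.
Qed.

Lemma cont_refl (g : R -> R) : continuity g -> continuity (fun y => g (- y)).
Proof.
  intros Hg. change (fun y => g (- y)) with (comp g (fun y => - y)).
  apply continuity_comp; auto. apply continuity_opp, derivable_continuous, derivable_id.
Qed.

Lemma first_hit (g : R -> R) x1 x2 d : continuity g -> x1 < x2 -> g x1 < d -> d <= g x2 ->
  exists s, x1 < s <= x2 /\ g s = d /\ forall y, x1 <= y < s -> g y < d.
Proof.
  intros Hg H12 H1 H2.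
  assert (Hh : continuity (fun y => - g (- y))).
  { apply continuity_opp, cont_refl; auto. }
  destruct (last_hit (fun y => - g (- y)) (- x2) (- x1) (- d) Hh) as [s [Hs [Hs2 Hs3]]].
  lra. rewrite Ropp_involutive; lra. rewrite Ropp_involutive; lra.
  exists (- s). split; [lra|]. split. lra.
  intros y Hy. specialize (Hs3 (- y)). rewrite Ropp_involutive in Hs3.
  assert (- g y > - d) by (apply Hs3; lra). lra.
Qed.

Lemma cover_ivt (g : R -> R) s s' c d : continuity g -> s <= s' ->
  ((g s = c /\ g s' = d) \/ (g s = d /\ g s' = c)) ->
  forall w, c <= w <= d -> exists y, s <= y <= s' /\ g y = w.
Proof.
  intros Hg Hss H w Hw.
  destruct (IVT_cor (fun y => g y - w) s s') as [z [Hz Hz']]; auto.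
  apply continuity_minus; auto. apply continuity_const. intros a b; auto.
  destruct H as [[-> ->]|[-> ->]]; nra.
  exists z; split; auto; lra.
Qed.

Lemma sub_core (g : R -> R) yc yd c d : continuity g -> yc < yd -> g yc = c -> g yd = d -> c < d ->
  exists s s', yc <= s <= s' /\ s' <= yd /\ (forall y, s <= y <= s' -> c <= g y <= d) /\
    (forall w, c <= w <= d -> exists y, s <= y <= s' /\ g y = w).
Proof.
  intros Hg Hy Hc Hd Hcd.
  destruct (last_hit g yc yd c Hg Hy) as [s [Hs [Hgs Hs3]]]; try lra.
  destruct (first_hit g s yd d Hg) as [s' [Hs' [Hgs' Hs3']]]; try lra.
  exists s, s'. split; [lra|]. split; [lra|]. split.
  - intros y Hy'. destruct (Req_dec_T y s) as [->|h1]. lra.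
    destruct (Req_dec_T y s') as [->|h2]. lra.
    assert (g y > c) by (apply Hs3; lra). assert (g y < d) by (apply Hs3'; lra). lra.
  - apply cover_ivt; auto; lra.
Qed.

Lemma sub_lemma (g : R -> R) al be c d : continuity g -> c <= d ->
  (forall w, c <= w <= d -> exists y, al <= y <= be /\ g y = w) ->
  exists s s', al <= s <= s' /\ s' <= be /\ (forall y, s <= y <= s' -> c <= g y <= d) /\
    (forall w, c <= w <= d -> exists y, s <= y <= s' /\ g y = w).
Proof.
  intros Hg Hcd Hcov.
  destruct (Hcov c) as [yc [Hyc Hgc]]; [lra|].
  destruct (Hcov d) as [yd [Hyd Hgd]]; [lra|].
  destruct (Req_dec_T c d) as [<-|Hne].
  { exists yc, yc. split; [lra|]. split; [lra|]. split.
    - intros y Hy. replace y with yc by lra. lra.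
    - intros w Hw. exists yc. split; [lra|]. lra. }
  assert (Hlt : c < d) by lra.
  destruct (Rlt_le_dec yc yd) as [H|H].
  - destruct (sub_core g yc yd c d) as [s [s' [H1 [H2 [H3 H4]]]]]; auto.
    exists s, s'. split; [lra|]. split; [lra|]. auto.
  - assert (yd <> yc) by (intro; subst; lra).
    destruct (sub_core (fun y => g (- y)) (- yc) (- yd) c d) as [s [s' [H1 [H2 [H3 H4]]]]];
      try (rewrite Ropp_involutive; auto); auto; try lra.
    apply cont_refl; auto.
    exists (- s'), (- s). split; [lra|]. split; [lra|]. split.
    + intros y Hy. specialize (H3 (- y)). rewrite Ropp_involutive in H3. apply H3; lra.
    + intros w Hw. destruct (H4 w Hw) as [y [Hy Hy']]. exists (- y). split; [lra|]. auto.
Qed.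

Definition inI (J : R * R) (y : R) := fst J <= y <= snd J.
Definition covers (g : R -> R) (J1 J2 : R * R) :=
  forall w, inI J2 w -> exists y, inI J1 y /\ g y = w.
Definition hdI (W : list (R * R)) (J : R * R) :=
  match W with nil => J | K0 :: _ => K0 end.
Fixpoint chain (g : R -> R) (W : list (R * R)) (J : R * R) : Prop :=
  match W with nil => True | K0 :: W0 => covers g K0 (hdI W0 J) /\ chain g W0 J end.

Lemma iter_S (g : R -> R) n y : iter g (S n) y = iter g n (g y).
Proof. induction n; simpl; auto. simpl in IHn. rewrite IHn. auto. Qed.

Lemma iter_cont g n : continuity g -> continuity (iter g n).
Proof.
  intros Hg. induction n; simpl.
  - apply derivable_continuous, derivable_id.
  - change (fun x => g (iter g n x)) with (comp g (iter g n)). apply continuity_comp; auto.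
Qed.

Lemma chain_sub (g : R -> R) : continuity g -> forall W J, chain g W J -> fst J <= snd J ->
  exists s s', s <= s' /\ (forall y, s <= y <= s' -> inI (hdI W J) y) /\
  (forall t, (t < length W)%nat -> forall y, s <= y <= s' -> inI (nth t W (0,0)) (iter g t y)) /\
  (forall y, s <= y <= s' -> inI J (iter g (length W) y)) /\
  (forall w, inI J w -> exists y, s <= y <= s' /\ iter g (length W) y = w).
Proof.
  intros Hg W. induction W as [|I W IH]; intros J Hch HJ.
  - exists (fst J), (snd J). simpl. split; auto. split; [unfold inI; auto|].
    split; [intros; lia|]. split; [unfold inI; auto|]. intros w Hw; exists w; split; auto.
  - destruct Hch as [Hc Hch]. destruct (IH J Hch HJ) as [s1 [s1' [H1 [H2 [H3 [H4 H5]]]]]].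
    destruct (sub_lemma g (fst I) (snd I) s1 s1' Hg H1) as [s [s' [K1 [K2 [K3 K4]]]]].
    { intros w Hw. apply Hc. apply H2; auto. }
    exists s, s'. split; [lra|]. split; [intros y Hy; simpl; unfold inI; lra|].
    split; [|split].
    + intros t Ht y Hy. destruct t as [|t]; simpl nth.
      * simpl; unfold inI; lra.
      * rewrite iter_S. apply H3. simpl in Ht; lia. apply K3; auto.
    + intros y Hy. simpl length. rewrite iter_S. apply H4. apply K3; auto.
    + intros w Hw. destruct (H5 w Hw) as [y1 [Hy1 Hy1']].
      destruct (K4 y1 Hy1) as [y [Hy Hy']]. exists y. split; auto.
      simpl length. rewrite iter_S, Hy'. auto.
Qed.

Lemma loop_lemma (g : R -> R) : continuity g -> forall I W,
  chain g (I :: W) I -> fst I <= snd I ->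
  exists y, inI I y /\ iter g (S (length W)) y = y /\
    (forall t, (t < S (length W))%nat -> inI (nth t (I :: W) (0,0)) (iter g t y)).
Proof.
  intros Hg I W Hch HI.
  destruct (chain_sub g Hg (I :: W) I Hch HI) as [s [s' [H1 [H2 [H3 [H4 H5]]]]]].
  simpl hdI in H2. simpl length in *.
  assert (Hs : inI I s) by (apply H2; lra). assert (Hs' : inI I s') by (apply H2; lra).
  destruct (H5 s Hs) as [y1 [Hy1 E1]]. destruct (H5 s' Hs') as [y2 [Hy2 E2]].
  set (h := fun y => iter g (S (length W)) y - y).
  assert (Hh : continuity h).
  { apply continuity_minus. apply iter_cont; auto. apply derivable_continuous, derivable_id. }
  destruct (Rle_dec y1 y2) as [L|L].
  - destruct (IVT_cor h y1 y2 Hh L) as [z [Hz Hz']].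
    { unfold h. rewrite E1, E2. nra. }
    exists z. unfold h in Hz'. split; [apply H2; lra|]. split; [lra|].
    intros t Ht. apply H3; auto; lra.
  - destruct (IVT_cor h y2 y1 Hh) as [z [Hz Hz']]. lra.
    { unfold h. rewrite E1, E2. nra. }
    exists z. unfold h in Hz'. split; [apply H2; lra|]. split; [lra|].
    intros t Ht. apply H3; auto; lra.
Qed.

Definition btw (x y w : R) := Rmin x y <= w <= Rmax x y.

Lemma btw_prod x y w : btw x y w -> (x - w) * (y - w) <= 0.
Proof.
  unfold btw, Rmin, Rmax. intros Hw. destruct (Rle_dec x y); destruct Hw.
  - assert (0 <= w - x) by lra. assert (0 <= y - w) by lra. nra.
  - nra.
Qed.

Lemma ivt2 (g : R -> R) : continuity g -> forall p1 p2 w, btw (g p1) (g p2) w ->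
  exists y, btw p1 p2 y /\ g y = w.
Proof.
  intros Hg p1 p2 w Hw. 
  destruct (Rle_dec p1 p2) as [L|L].
  - destruct (IVT_cor (fun y => g y - w) p1 p2) as [z [Hz Hz']]; auto.
    apply continuity_minus; auto. apply continuity_const. intros a b; auto.
    cbv beta. apply btw_prod; auto.
    exists z. unfold btw, Rmin, Rmax. destruct Rle_dec; split; lra.
  - destruct (IVT_cor (fun y => g y - w) p2 p1) as [z [Hz Hz']].
    apply continuity_minus; auto. apply continuity_const. intros a b; auto. lra.
    cbv beta. rewrite Rmult_comm. apply btw_prod; auto.
    exists z. unfold btw, Rmin, Rmax. destruct Rle_dec; split; lra.
Qed.

Definition Hyp (f : R -> R) (a : R) : Prop :=
  maps_unit f /\ continuous_on_unit f /\ 0 <= a <= 1 /\ f a = a /\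
  (forall z, 0 <= z <= 1 -> f z = z -> z = a).

Lemma fcl_eq f y : 0 <= y <= 1 -> fcl f y = f y.
Proof. intros. unfold fcl. rewrite clamp_id; auto. Qed.

Lemma side_left f a : Hyp f a -> forall z, 0 <= z <= 1 -> z < a -> f z > z.
Proof.
  intros [Hm [Hc [Ha [Hfa Hu]]]] z Hz Hza.
  destruct (Rlt_dec z (f z)) as [h|h]; auto. exfalso.
  assert (f z <> z) by (intro E; apply Hu in E; auto; lra).
  assert (f 0 > 0).
  { destruct (Hm 0) as [h1 h2]; [lra|]. destruct (Req_dec_T (f 0) 0) as [E|E]; [|lra].
    apply Hu in E; lra. }
  destruct (IVT_cor (fun y => fcl f y - y) 0 z) as [w [Hw Hw']].
  apply continuity_minus. apply fcl_cont; auto. apply derivable_continuous, derivable_id.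
  lra. rewrite !fcl_eq; try lra. nra.
  rewrite fcl_eq in Hw' by lra. assert (w = a) by (apply Hu; lra). lra.
Qed.

Lemma side_right f a : Hyp f a -> forall z, 0 <= z <= 1 -> a < z -> f z < z.
Proof.
  intros [Hm [Hc [Ha [Hfa Hu]]]] z Hz Hza.
  destruct (Rlt_dec (f z) z) as [h|h]; auto. exfalso.
  assert (f z <> z) by (intro E; apply Hu in E; auto; lra).
  assert (f 1 < 1).
  { destruct (Hm 1) as [h1 h2]; [lra|]. destruct (Req_dec_T (f 1) 1) as [E|E]; [|lra].
    apply Hu in E; lra. }
  destruct (IVT_cor (fun y => fcl f y - y) z 1) as [w [Hw Hw']].
  apply continuity_minus. apply fcl_cont; auto. apply derivable_continuous, derivable_id.
  lra. rewrite !fcl_eq; try lra. nra.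
  rewrite fcl_eq in Hw' by lra. assert (w = a) by (apply Hu; lra). lra.
Qed.

Lemma iter_add (g : R -> R) m n y : iter g (m + n) y = iter g m (iter g n y).
Proof. induction m; simpl; auto. rewrite IHm; auto. Qed.

Lemma iter_in f a : Hyp f a -> forall n y, 0 <= y <= 1 -> 0 <= iter f n y <= 1.
Proof. intros [Hm _] n y Hy. induction n; simpl; auto. Qed.

Lemma iter_fcl f a : Hyp f a -> forall n y, 0 <= y <= 1 -> iter (fcl f) n y = iter f n y.
Proof.
  intros H n y Hy. induction n; simpl; auto. rewrite IHn. apply fcl_eq.
  apply (iter_in f a H); auto.
Qed.

Definition H (a z : R) : R * R := (Rmin z a, Rmax z a).

Lemma F1 f a : Hyp f a -> forall z, 0 <= z <= 1 -> covers (fcl f) (H a z) (H a (f z)).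
Proof.
  intros Hy z Hz w Hw. pose proof Hy as [Hm [Hc [Ha [Hfa Hu]]]].
  destruct (ivt2 (fcl f) (fcl_cont f Hc) z a w) as [y [H1 H2]].
  - unfold btw. rewrite !fcl_eq; try lra. rewrite Hfa. exact Hw.
  - exists y; split; auto.
Qed.

Definition side (a z : R) : bool := if Rlt_dec a z then true else false.

Lemma sc_side f a : Hyp f a -> forall w, 0 <= w <= 1 -> w <> a -> f w <> a ->
  sign_change f w = if Bool.eqb (side a w) (side a (f w)) then 0%nat else 1%nat.
Proof.
  intros Hy w Hw Hwa Hfwa. pose proof Hy as [Hm [Hc [Ha [Hfa Hu]]]].
  assert (Hfw := Hm w Hw).
  unfold sign_change, side.
  destruct (Rlt_dec a w); destruct (Rlt_dec a (f w)); simpl.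
  - pose proof (side_right f a Hy w Hw r). pose proof (side_right f a Hy (f w) Hfw r0).
    destruct Rlt_dec; auto; nra.
  - pose proof (side_right f a Hy w Hw r). pose proof (side_left f a Hy (f w) Hfw ltac:(lra)).
    destruct Rlt_dec; auto; nra.
  - pose proof (side_left f a Hy w Hw ltac:(lra)). pose proof (side_right f a Hy (f w) Hfw r).
    destruct Rlt_dec; auto; nra.
  - pose proof (side_left f a Hy w Hw ltac:(lra)). pose proof (side_left f a Hy (f w) Hfw ltac:(lra)).
    destruct Rlt_dec; auto; nra.
Qed.

Lemma nsc_front f y n : num_sc_aux f y (S n) = (sign_change f y + num_sc_aux f (f y) n)%nat.
Proof.
  induction n.
  - simpl. lia.
  - change (num_sc_aux f y (S (S n))) with (num_sc_aux f y (S n) + sign_change f (iter f (S n) y))%nat.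
    rewrite IHn. simpl (num_sc_aux f (f y) (S n)). rewrite iter_S. lia.
Qed.

Lemma nsc_add f y M d : num_sc_aux f y (M + d) = (num_sc_aux f y M + num_sc_aux f (iter f M y) d)%nat.
Proof.
  induction d.
  - rewrite Nat.add_0_r. simpl. lia.
  - rewrite Nat.add_succ_r. simpl. rewrite IHd.
    replace (iter f (M + d) y) with (iter f d (iter f M y)) by (rewrite Nat.add_comm, iter_add; auto). lia.
Qed.

Lemma sc_le1 f y : (sign_change f y <= 1)%nat.
Proof. unfold sign_change. destruct Rlt_dec; lia. Qed.

Lemma nsc_le f y n : (num_sc_aux f y n <= n)%nat.
Proof. induction n; simpl; auto. pose proof (sc_le1 f (iter f n y)). lia. Qed.

Lemma iter_mul (g : R -> R) y d k : iter g d y = y -> iter g (k * d) y = y.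
Proof.
  intros Hd. induction k; simpl; auto.
  rewrite iter_add, IHk, Hd; auto.
Qed.

Lemma nsc_mul f y d k : iter f d y = y -> num_sc_aux f y (k * d) = (k * num_sc_aux f y d)%nat.
Proof.
  intros Hd. induction k; simpl; auto.
  replace (d + k * d)%nat with (k * d + d)%nat by lia.
  rewrite nsc_add, iter_mul; auto. lia.
Qed.

Lemma least_nat (P : nat -> Prop) N : P N -> exists d, (d <= N)%nat /\ P d /\ forall i, (i < d)%nat -> ~ P i.
Proof.
  revert P. induction N; intros P HP.
  - exists 0%nat. split; auto. split; auto. intros; lia.
  - destruct (classic (P 0%nat)) as [h|h].
    + exists 0%nat. split; [lia|]. split; auto. intros; lia.
    + destruct (IHN (fun i => P (S i)) HP) as [d [Hd [Pd Hm]]].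
      exists (S d). split; [lia|]. split; auto.
      intros i Hi. destruct i; auto. apply Hm. lia.
Qed.

Lemma orn_from_loop f a : Hyp f a -> forall y N, 0 <= y <= 1 -> y <> a -> (1 <= N)%nat ->
  iter f N y = y ->
  exists d, periodic_pt f y d /\ (2 <= d)%nat /\
    orn f y d = INR (num_sc_aux f y N) / (2 * INR N).
Proof.
  intros Hy y N Hy01 Hya HN HNy. pose proof Hy as [Hm [Hc [Ha [Hfa Hu]]]].
  destruct (least_nat (fun i => (0 < i)%nat /\ iter f i y = y) N) as [d [Hd [[Pd1 Pd2] Hmin]]].
  { split; [lia|auto]. }
  assert (Hd2 : (2 <= d)%nat).
  { destruct d as [|[|d]]; try lia. simpl in Pd2. exfalso. apply Hya. apply Hu; auto. }
  assert (HNd : N = (N / d * d)%nat).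
  { pose proof (Nat.div_mod N d ltac:(lia)) as E.
    destruct (Nat.eq_dec (N mod d) 0) as [h|h].
    - rewrite h in E. lia.
    - exfalso. apply (Hmin (N mod d)). apply Nat.mod_upper_bound; lia.
      split; [lia|]. rewrite <- HNy at 2. rewrite E at 2.
      rewrite Nat.add_comm, iter_add. rewrite Nat.mul_comm, iter_mul; auto. }
  exists d. split; [|split; auto].
  - split; [lia|]. split; auto. intros i Hi E. apply (Hmin i); [lia|]. split; [lia|auto].
  - unfold orn, num_sc. rewrite HNd at 1. rewrite nsc_mul; auto.
    set (k := (N / d)%nat) in *.
    assert (1 <= k)%nat by (destruct k; simpl in HNd; lia).
    rewrite HNd. rewrite !mult_INR.
    assert (INR k > 0) by (apply lt_0_INR; lia).
    assert (INR d > 0) by (apply lt_0_INR; lia).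
    field. lra.
Qed.

Fixpoint cntr (a : R) (rs : list R) (w : R) : nat :=
  match rs with
  | nil => 0%nat
  | z :: rs' => ((if Bool.eqb (side a z) (side a (hd w rs')) then 0 else 1) + cntr a rs' w)%nat
  end.

Lemma hd_app {A} (w : A) l1 l2 : hd w (l1 ++ l2) = hd (hd w l2) l1.
Proof. destruct l1; simpl; auto. Qed.

Lemma cntr_app a l1 l2 w : cntr a (l1 ++ l2) w = (cntr a l1 (hd w l2) + cntr a l2 w)%nat.
Proof.
  induction l1 as [|z l1 IH]; simpl; auto.
  rewrite IH, hd_app. lia.
Qed.

Lemma cntr_le a rs w : (cntr a rs w <= length rs)%nat.
Proof.
  induction rs; simpl; auto. destruct Bool.eqb; lia.
Qed.

Lemma iter_fix (g : R -> R) a s : g a = a -> iter g s a = a.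
Proof. intros h. induction s; simpl; auto. rewrite IHs; auto. Qed.

Lemma avoid_a f a : Hyp f a -> forall y N, y <> a -> (1 <= N)%nat -> iter f N y = y ->
  forall t, iter f t y <> a.
Proof.
  intros Hy y N Hya HN HNy t Ht. pose proof Hy as [Hm [Hc [Ha [Hfa Hu]]]].
  apply Hya. rewrite <- (iter_mul f y N (S t)) by auto.
  replace (S t * N)%nat with ((S t * N - t) + t)%nat by nia.
  rewrite iter_add, Ht, iter_fix; auto.
Qed.

Lemma sc_follow f a : Hyp f a -> forall rs y w, 0 <= y <= 1 -> (forall t, iter f t y <> a) ->
  (forall t, (t < length rs)%nat -> side a (iter f t y) = side a (nth t rs 0)) ->
  side a (iter f (length rs) y) = side a w ->
  num_sc_aux f y (length rs) = cntr a rs w.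
Proof.
  intros Hy rs. pose proof Hy as [Hm [Hc [Ha [Hfa Hu]]]].
  induction rs as [|z rs IH]; intros y w Hy01 Hav Hsd Hend; [simpl; auto|].
  cbn [length cntr]. rewrite nsc_front. rewrite (sc_side f a Hy y Hy01 (Hav 0%nat) (Hav 1%nat)).
  rewrite (IH (f y) w).
  - assert (E1 : side a y = side a z) by (apply (Hsd 0%nat); simpl; lia).
    assert (E2 : side a (f y) = side a (hd w rs)).
    { destruct rs as [|z' rs'].
      - simpl in Hend. simpl. auto.
      - apply (Hsd 1%nat). simpl; lia. }
    rewrite E1, E2. auto.
  - apply Hm; auto.
  - intros t. rewrite <- iter_S. auto.
  - intros t Ht. rewrite <- iter_S. apply (Hsd (S t)). simpl; lia.
  - rewrite <- iter_S. auto.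
Qed.

Lemma side_H a z w : inI (H a z) w -> w <> a -> z <> a -> side a w = side a z.
Proof.
  unfold inI, H, side, Rmin, Rmax. simpl. intros Hw h1 h2.
  destruct (Rle_dec z a); destruct Hw; destruct (Rlt_dec a w); destruct (Rlt_dec a z); auto; lra.
Qed.

Notation node := (R * (R * R))%type.
Definition valid (a : R) (nd : node) :=
  fst nd <> a /\ 0 <= fst nd <= 1 /\ forall w, inI (snd nd) w -> inI (H a (fst nd)) w.

Lemma loop_orbit f a : Hyp f a -> forall (nd : node) (W : list node),
  Forall (valid a) (nd :: W) ->
  chain (fcl f) (map snd (nd :: W)) (snd nd) ->
  fst (snd nd) <= snd (snd nd) ->
  (exists t, (t < length (nd :: W))%nat /\ forall w, inI (snd (nth t (nd :: W) nd)) w -> w <> a) ->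
  exists y d, 0 <= y <= 1 /\ periodic_pt f y d /\ (2 <= d)%nat /\
    orn f y d = INR (cntr a (map fst (nd :: W)) (fst nd)) / (2 * INR (length (nd :: W))).
Proof.
  intros Hy nd W Hval Hch Hnd [t0 [Ht0 Hfree]]. pose proof Hy as [Hm [Hc [Ha [Hfa Hu]]]].
  pose proof Hval as Hval'. rewrite Forall_forall in Hval'.
  assert (Hnth : forall t, (t < length (nd :: W))%nat -> valid a (nth t (nd :: W) nd)).
  { intros t Ht. apply Hval'. apply nth_In; auto. }
  destruct (loop_lemma (fcl f) (fcl_cont f Hc) (snd nd) (map snd W) Hch Hnd) as [y [Hy1 [Hy2 Hy3]]].
  rewrite length_map in Hy2, Hy3.
  assert (Hy01 : 0 <= y <= 1).
  { destruct (Hnth 0%nat ltac:(simpl; lia)) as [_ [Hz Hsub]]. simpl in Hz, Hsub.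
    specialize (Hsub y Hy1). unfold inI, H, Rmin, Rmax in Hsub; simpl in Hsub.
    destruct Rle_dec; lra. }
  assert (Hit : forall t, (t < S (length W))%nat -> inI (snd (nth t (nd :: W) nd)) (iter f t y)).
  { intros t Ht. rewrite <- (iter_fcl f a Hy); auto.
    specialize (Hy3 t Ht). replace (snd (nth t (nd :: W) nd)) with (nth t (map snd (nd :: W)) (0,0)); auto.
    rewrite nth_indep with (d' := snd nd) by (rewrite length_map; exact Ht).
    apply map_nth. }
  rewrite (iter_fcl f a Hy) in Hy2 by auto.
  assert (Hya : y <> a).
  { intro E. subst y. apply (Hfree a); auto.
    assert (Hh : inI (snd (nth t0 (nd :: W) nd)) (iter f t0 a)) by (apply Hit; simpl in Ht0; lia).
    rewrite iter_fix in Hh; auto. }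
  destruct (orn_from_loop f a Hy y (S (length W)) Hy01 Hya ltac:(lia) Hy2) as [d [Hd1 [Hd2 Hd3]]].
  exists y, d. split; auto. split; auto. split; auto. rewrite Hd3.
  replace (S (length W)) with (length (map fst (nd :: W))) by (simpl; rewrite length_map; auto).
  rewrite (sc_follow f a Hy (map fst (nd :: W)) y (fst nd) Hy01).
  - simpl. rewrite length_map. auto.
  - apply (avoid_a f a Hy y (S (length W))); auto. lia.
  - intros t Ht. rewrite length_map in Ht.
    destruct (Hnth t Ht) as [Hza [Hz01 Hsub]].
    rewrite nth_indep with (d' := fst nd) by (rewrite length_map; auto).
    rewrite map_nth. apply side_H.
    + apply Hsub. apply Hit. exact Ht.
    + apply (avoid_a f a Hy y (S (length W))); auto. lia.
    + auto.
  - rewrite length_map. simpl length. rewrite Hy2.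
    destruct (Hnth 0%nat ltac:(simpl; lia)) as [Hza [Hz01 Hsub]]. simpl in Hsub, Hza.
    apply side_H; [apply Hsub; auto | auto | auto].
Qed.

Lemma nat_big X : exists m : nat, INR m > X.
Proof.
  destruct (archimed X) as [h1 h2].
  destruct (Z_le_gt_dec (up X) 0) as [h|h].
  - exists 0%nat. simpl. apply IZR_le in h. lra.
  - exists (Z.to_nat (up X)). rewrite INR_IZR_INZ, Z2Nat.id by lia. lra.
Qed.

Lemma div_le a b d1 d2 : 0 < d1 -> 0 < d2 -> a * d2 <= b * d1 -> a / d1 <= b / d2.
Proof.
  intros h1 h2 h. apply (Rmult_le_reg_r (d1 * d2)); [nra|].
  replace (a / d1 * (d1 * d2)) with (a * d2) by (field; lra).
  replace (b / d2 * (d1 * d2)) with (b * d1) by (field; lra). lra.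
Qed.

Lemma abs_div_pos x d : d > 0 -> Rabs (x / d) = Rabs x / d.
Proof.
  intros h. unfold Rdiv. rewrite Rabs_mult, (Rabs_pos_eq (/ d)); auto.
  apply Rlt_le, Rinv_0_lt_compat; auto.
Qed.

Definition Rmj (l n C1 N0 m j : nat) : R :=
  (2 * INR m * INR l + 2 * INR j + INR C1) / (2 * (INR m * INR n + 2 * INR j + INR N0)).

Lemma least_nat' (P : nat -> Prop) N : P N -> exists d, P d /\ forall i, (i < d)%nat -> ~ P i.
Proof.
  revert P. induction N; intros P HP.
  - exists 0%nat. split; auto. intros; lia.
  - destruct (classic (P 0%nat)) as [h|h].
    + exists 0%nat. split; auto. intros; lia.
    + destruct (IHN (fun i => P (S i)) HP) as [d [Pd Hm]].
      exists (S d). split; auto.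
      intros i Hi. destruct i; auto. apply Hm. lia.
Qed.

Lemma density (l n C1 N0 : nat) : (1 <= n)%nat -> (2 * l <= n)%nat -> (C1 <= N0)%nat ->
  forall r eps, INR l / INR n <= r <= 1 / 2 -> eps > 0 ->
  exists m j, (1 <= m)%nat /\ Rabs (Rmj l n C1 N0 m j - r) < eps.
Proof.
  intros Hn Hln HC r eps Hr He.
  assert (Hn' : INR n >= 1) by (apply Rle_ge; apply (le_INR 1); auto).
  assert (Hln' : 2 * INR l <= INR n) by (rewrite <- (mult_INR 2); apply le_INR; auto).
  assert (HC' : INR C1 <= INR N0) by (apply le_INR; auto).
  assert (Hl0 := pos_INR l). assert (HC0 := pos_INR C1).
  destruct (nat_big ((INR C1 + INR N0 + 2) / eps)) as [m0 Hm0].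
  set (m := S m0).
  assert (Hm : INR m > (INR C1 + INR N0 + 2) / eps) by (unfold m; rewrite S_INR; lra).
  assert (Hm1 : INR m >= 1) by (unfold m; rewrite S_INR; pose proof (pos_INR m0); lra).
  assert (Hme : (INR C1 + INR N0 + 2) < eps * INR m).
  { apply (Rmult_lt_compat_l eps) in Hm; auto. unfold Rdiv in Hm.
    replace (eps * ((INR C1 + INR N0 + 2) * / eps)) with (INR C1 + INR N0 + 2) in Hm by (field; lra). lra. }
  assert (HD : forall j, 2 * (INR m * INR n + 2 * INR j + INR N0) > 0).
  { intros j. pose proof (pos_INR j). pose proof (pos_INR N0). nra. }
  assert (H0 : Rabs (Rmj l n C1 N0 m 0 - INR l / INR n) <= (INR C1 + INR N0) / (2 * INR m)).
  { unfold Rmj. change (INR 0) with 0.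
    replace ((2 * INR m * INR l + 2 * 0 + INR C1) / (2 * (INR m * INR n + 2 * 0 + INR N0)) - INR l / INR n)
      with ((INR n * INR C1 - 2 * INR l * INR N0) / (2 * INR n * (INR m * INR n + INR N0))) by (field; split; nra).
    rewrite abs_div_pos by nra.
    apply div_le; [nra|nra|].
    assert (Rabs (INR n * INR C1 - 2 * INR l * INR N0) <= INR n * (INR C1 + INR N0)).
    { pose proof (pos_INR N0). unfold Rabs; destruct Rcase_abs; nra. }
    pose proof (pos_INR N0). pose proof (Rabs_pos (INR n * INR C1 - 2 * INR l * INR N0)).
    assert (INR m <= INR m * INR n + INR N0) by nra.
    apply Rle_trans with (INR n * (INR C1 + INR N0) * (2 * INR m)). apply Rmult_le_compat_r; nra.
    nra. }
  assert (Hsmall : (INR C1 + INR N0) / (2 * INR m) < eps).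
  { apply (Rmult_lt_reg_r (2 * INR m)); [nra|]. unfold Rdiv.
    rewrite Rmult_assoc, Rinv_l, Rmult_1_r by nra. nra. }
  assert (Hstep : forall j, Rmj l n C1 N0 m (S j) <= Rmj l n C1 N0 m j + 1 / INR m).
  { intros j. unfold Rmj. rewrite S_INR. pose proof (pos_INR j). pose proof (pos_INR N0).
    set (A := 2 * INR m * INR l + INR C1). set (D := INR m * INR n + INR N0).
    assert (HAD : A <= D) by (unfold A, D; nra).
    assert (HDm : D >= INR m) by (unfold D; nra).
    replace (2 * INR m * INR l + 2 * (INR j + 1) + INR C1) with (A + 2 * INR j + 2) by (unfold A; ring).
    replace (INR m * INR n + 2 * (INR j + 1) + INR N0) with (D + 2 * INR j + 2) by (unfold D; ring).
    replace (2 * INR m * INR l + 2 * INR j + INR C1) with (A + 2 * INR j) by (unfold A; ring).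
    replace (INR m * INR n + 2 * INR j + INR N0) with (D + 2 * INR j) by (unfold D; ring).
    assert (HA0 : A >= 0) by (unfold A; nra).
    apply Rle_trans with ((A + 2 * INR j) / (2 * (D + 2 * INR j)) + 1 / D).
    - replace ((A + 2 * INR j + 2) / (2 * (D + 2 * INR j + 2)))
        with ((A + 2 * INR j) / (2 * (D + 2 * INR j)) + (D - A) / ((D + 2 * INR j) * (D + 2 * INR j + 2)))
        by (field; nra).
      apply Rplus_le_compat_l.
      apply (Rmult_le_reg_r ((D + 2 * INR j) * (D + 2 * INR j + 2))); [nra|].
      unfold Rdiv. rewrite Rmult_assoc, Rinv_l, Rmult_1_r by nra.
      replace (1 * / D * ((D + 2 * INR j) * (D + 2 * INR j + 2))) with
        ((D + 2 * INR j) * (D + 2 * INR j + 2) / D) by (field; nra).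
      apply (Rmult_le_reg_r D); [nra|]. unfold Rdiv.
      rewrite Rmult_assoc, Rinv_l, Rmult_1_r by nra. nra.
    - apply Rplus_le_compat_l. unfold Rdiv. rewrite !Rmult_1_l.
      apply Rinv_le_contravar; nra. }
  assert (Hlim : exists J, 1/2 - Rmj l n C1 N0 m J < eps).
  { set (D := INR m * INR n + INR N0).
    destruct (nat_big (D / eps)) as [J HJ]. exists J. unfold Rmj.
    pose proof (pos_INR N0).
    assert (HJ' : D < eps * INR J).
    { apply (Rmult_lt_compat_l eps) in HJ; auto. unfold Rdiv in HJ.
      replace (eps * (D * / eps)) with D in HJ by (field; lra). lra. }
    fold D. replace (INR m * INR n + 2 * INR J + INR N0) with (D + 2 * INR J) by (unfold D; ring).
    assert (HDp : D > 0) by (unfold D; nra).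
    replace (1 / 2 - (2 * INR m * INR l + 2 * INR J + INR C1) / (2 * (D + 2 * INR J)))
      with ((D - (2 * INR m * INR l + INR C1)) / (2 * (D + 2 * INR J))) by (field; nra).
    apply (Rmult_lt_reg_r (2 * (D + 2 * INR J))); [nra|]. unfold Rdiv.
    rewrite Rmult_assoc, Rinv_l, Rmult_1_r by nra. unfold D in *. nra. }
  destruct (Rle_dec r (Rmj l n C1 N0 m 0)) as [Hc|Hc].
  - exists m, 0%nat. split; [unfold m; lia|].
    unfold Rabs at 1. destruct Rcase_abs; [lra|].
    unfold Rabs in H0; destruct Rcase_abs in H0; lra.
  - destruct Hlim as [J HJ].
    destruct (least_nat' (fun j => Rmj l n C1 N0 m j > r - eps) J) as [j [Pj Hmin]]; [simpl; lra|].
    exists m, j. split; [unfold m; lia|].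
    destruct j as [|j'].
    + unfold Rabs; destruct Rcase_abs; lra.
    + assert (Rmj l n C1 N0 m j' <= r - eps) by (apply Rnot_gt_le, (Hmin j'); lia).
      pose proof (Hstep j').
      assert (1 / INR m < eps).
      { apply (Rmult_lt_reg_r (INR m)); [lra|]. unfold Rdiv. rewrite Rmult_assoc, Rinv_l by lra. nra. }
      unfold Rabs; destruct Rcase_abs; lra.
Qed.

Definition subI (J1 J2 : R * R) := forall w, inI J1 w -> inI J2 w.

Lemma subI_trans J1 J2 J3 : subI J1 J2 -> subI J2 J3 -> subI J1 J3.
Proof. unfold subI; auto. Qed.

Lemma subI_refl J : subI J J.
Proof. unfold subI; auto. Qed.

Lemma covers_mono g I J J' : covers g I J -> subI J' J -> covers g I J'.
Proof. unfold covers, subI; intros h1 h2 w hw; auto. Qed.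

Lemma H_mono a z w : (z <= w <= a) \/ (a <= w <= z) -> subI (H a w) (H a z).
Proof.
  intros Hc y. unfold inI, H, Rmin, Rmax; simpl.
  repeat destruct Rle_dec; lra.
Qed.

Fixpoint segN (f : R -> R) (a z : R) (k : nat) : list node :=
  match k with
  | O => nil
  | S k' => (z, H a z) :: segN f a (f z) k'
  end.

Lemma segN_len f a z k : length (segN f a z k) = k.
Proof. revert z; induction k; intros z; simpl; auto. Qed.

Lemma segN_split f a z k1 k2 : segN f a z (k1 + k2) = segN f a z k1 ++ segN f a (iter f k1 z) k2.
Proof.
  revert z; induction k1; intros z; simpl; auto. rewrite IHk1, <- iter_S. auto.
Qed.

Lemma segN_nth_fst f a z k t : (t < k)%nat -> nth t (map fst (segN f a z k)) 0 = iter f t z.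
Proof.
  revert z t; induction k; intros z t Ht; [lia|]. destruct t; simpl; auto.
  rewrite IHk by lia. change (f (iter f t z)) with (iter f (S t) z). rewrite iter_S. auto.
Qed.

Lemma chain_segN f a : Hyp f a -> forall k z J, 0 <= z <= 1 ->
  subI J (H a (iter f k z)) -> chain (fcl f) (map snd (segN f a z k)) J.
Proof.
  intros Hy k. pose proof Hy as [Hm _]. induction k; intros z J Hz HJ; simpl; auto. split.
  - destruct k; simpl.
    + eapply covers_mono. apply (F1 f a Hy z Hz). simpl in HJ. exact HJ.
    + apply (F1 f a Hy z Hz).
  - apply IHk. apply Hm; auto. rewrite <- iter_S. auto.
Qed.

Lemma starts_segN f a k z J : subI J (H a (iter f k z)) -> subI (hdI (map snd (segN f a z k)) J) (H a z).
Proof.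
  destruct k; simpl; auto. intros _. apply subI_refl.
Qed.

Lemma chain_app g W1 W2 J : chain g W1 (hdI W2 J) -> chain g W2 J -> chain g (W1 ++ W2) J.
Proof.
  induction W1 as [|I W1 IH]; simpl; auto. intros [h1 h2] h3. split; auto.
  destruct W1; simpl in *; auto.
Qed.

Lemma hdI_app W1 W2 J : W1 <> nil -> hdI (W1 ++ W2) J = hdI W1 J.
Proof. destruct W1; simpl; auto. intros h; congruence. Qed.

Lemma hdI_app' W1 W2 J : hdI (W1 ++ W2) J = hdI W1 (hdI W2 J).
Proof. destruct W1; simpl; auto. Qed.

Lemma cntr_segN f a : Hyp f a -> forall z k w, 0 <= z <= 1 -> (forall t, iter f t z <> a) ->
  side a w = side a (iter f k z) -> cntr a (map fst (segN f a z k)) w = num_sc_aux f z k.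
Proof.
  intros Hy z k w Hz Hav Hw.
  assert (E := sc_follow f a Hy (map fst (segN f a z k)) z w Hz Hav).
  rewrite length_map, segN_len in E. symmetry. apply E.
  - intros t Ht. rewrite segN_nth_fst; auto.
  - auto.
Qed.

Lemma valid_segN f a : Hyp f a -> forall z k, 0 <= z <= 1 -> (forall t, iter f t z <> a) ->
  Forall (valid a) (segN f a z k).
Proof.
  intros Hy z k. pose proof Hy as [Hm _]. revert z; induction k; intros z Hz Hav; simpl; auto.
  constructor.
  - split; [apply (Hav 0%nat)|]. split; auto.
  - apply IHk. apply Hm; auto. intros t. rewrite <- iter_S. auto.
Qed.

Lemma loop_orbit' f a : Hyp f a -> forall (W : list node) d0,
  W <> nil -> Forall (valid a) W ->
  chain (fcl f) (map snd W) (snd (hd d0 W)) ->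
  fst (snd (hd d0 W)) <= snd (snd (hd d0 W)) ->
  (exists t, (t < length W)%nat /\ forall w, inI (snd (nth t W d0)) w -> w <> a) ->
  exists y d, 0 <= y <= 1 /\ periodic_pt f y d /\ (2 <= d)%nat /\
    orn f y d = INR (cntr a (map fst W) (fst (hd d0 W))) / (2 * INR (length W)).
Proof.
  intros Hy W d0 HW. destruct W as [|nd W]; [congruence|]. simpl hd.
  intros h1 h2 h3 [t [Ht Hf]]. apply loop_orbit; auto. exists t. split; auto.
  intros w hw. apply (Hf w). rewrite nth_indep with (d' := nd); auto.
Qed.

Fixpoint reps (f : R -> R) (a v : R) (n k : nat) : list node :=
  match k with O => nil | S k' => segN f a v n ++ reps f a v n k' end.

Fixpoint Bp (a l r : R) (j : nat) : list node :=
  match j with O => (l, H a l) :: nil | S j' => (l, H a l) :: (r, H a r) :: Bp a l r j' end.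

Lemma reps_len f a v n k : length (reps f a v n k) = (k * n)%nat.
Proof. induction k; simpl; auto. rewrite length_app, segN_len, IHk. auto. Qed.

Lemma Bp_len a l r j : length (Bp a l r j) = (2 * j + 1)%nat.
Proof. induction j; simpl; auto. rewrite IHj. lia. Qed.

Lemma chain_Bp g a l r J : covers g (H a l) (H a r) -> covers g (H a r) (H a l) ->
  subI J (H a r) -> forall j, chain g (map snd (Bp a l r j)) J.
Proof.
  intros Clr Crl HJ j. induction j; simpl.
  - split; auto. eapply covers_mono; eauto.
  - split; [auto|]. split; [|auto]. destruct j; simpl; auto.
Qed.

Lemma construct f a (v u r l z1 : R) (n t1 t0 e : nat) (Jf : R * R) :
  Hyp f a -> 0 <= v <= 1 -> (forall t, iter f t v <> a) ->
  0 <= r <= 1 -> (forall t, iter f t r <> a) ->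
  0 <= l <= 1 -> l < a -> a < r ->
  iter f n v = u -> subI (H a v) (H a u) -> side a u = side a v ->
  (1 <= n)%nat -> (t1 < n)%nat -> (t0 < n)%nat ->
  covers (fcl f) (H a l) (H a r) -> covers (fcl f) (H a r) (H a l) ->
  subI (H a l) (H a (iter f (S t0) v)) -> side a (iter f (S t0) v) = side a l ->
  iter f e r = v ->
  z1 = iter f t1 v ->
  subI Jf (H a z1) -> covers (fcl f) Jf (H a (f z1)) -> (forall w, inI Jf w -> w <> a) ->
  fst Jf <= snd Jf ->
  forall m j, (1 <= m)%nat ->
  exists y d, 0 <= y <= 1 /\ periodic_pt f y d /\ (2 <= d)%nat /\
    orn f y d = INR (m * num_sc_aux f v n + num_sc_aux f v (S t0) + (2 * j + 1) + num_sc_aux f r e)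
      / (2 * INR (m * n + S t0 + (2 * j + 1) + e)).
Proof.
  intros Hy Hv Hva Hr Hra Hl Hla Har Hvu Hsub Hsd Hn Ht1 Ht0 Clr Crl Hle Hsle He Hz1 HJs HJc HJf HJn
    m j Hm. subst z1.
  pose proof Hy as [Hmap [Hc [Ha [Hfa Hu]]]].
  assert (Hit : forall t, 0 <= iter f t v <= 1) by (intros; apply (iter_in f a Hy); auto).
  assert (Hitr : forall t, 0 <= iter f t r <= 1) by (intros; apply (iter_in f a Hy); auto).
  set (k := (n - S t1)%nat).
  set (copy1 := segN f a v t1 ++ (iter f t1 v, Jf) :: segN f a (iter f (S t1) v) k).
  set (R2 := reps f a v n (m - 1)).
  set (E := segN f a v (S t0)).
  set (B := Bp a l r j).
  set (R5 := segN f a r e).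
  set (W := copy1 ++ R2 ++ E ++ B ++ R5).
  set (d0 := (v, H a v)).
  assert (Hcopy_fst : map fst copy1 = map fst (segN f a v n)).
  { unfold copy1. replace n with (t1 + S k)%nat by (unfold k; lia).
    rewrite segN_split. simpl. rewrite !map_app. simpl. auto. }
  assert (Hcopy_len : length copy1 = n).
  { unfold copy1. rewrite length_app. simpl. rewrite !segN_len. unfold k; lia. }
  assert (Hhd : hd d0 W = (v, if Nat.eqb t1 0 then Jf else H a v)).
  { unfold W, copy1. destruct t1; simpl.
    - auto.
    - auto. }
  assert (HJ0 : subI (snd (hd d0 W)) (H a v)).
  { rewrite Hhd. simpl. destruct (Nat.eqb_spec t1 0).
    - subst t1. exact HJs.
    - apply subI_refl. }
  assert (HJ0n : fst (snd (hd d0 W)) <= snd (snd (hd d0 W))).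
  { rewrite Hhd. simpl. destruct (Nat.eqb t1 0); auto.
    simpl. unfold Rmin, Rmax. destruct Rle_dec; lra. }
  set (J0 := snd (hd d0 W)).
  assert (Hch_R5 : chain (fcl f) (map snd R5) J0).
  { apply chain_segN; auto. rewrite He. auto. }
  assert (Hs_R5 : subI (hdI (map snd R5) J0) (H a r)).
  { apply starts_segN. rewrite He. auto. }
  assert (Hch_B : chain (fcl f) (map snd B) (hdI (map snd R5) J0)).
  { apply chain_Bp; auto. }
  assert (Hs_B : hdI (map snd B) (hdI (map snd R5) J0) = H a l).
  { unfold B. destruct j; simpl; auto. }
  assert (Hch_E : chain (fcl f) (map snd E) (hdI (map snd B) (hdI (map snd R5) J0))).
  { apply chain_segN; auto. rewrite Hs_B. auto. }
  assert (Hs_E : hdI (map snd E) (hdI (map snd B) (hdI (map snd R5) J0)) = H a v).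
  { unfold E. simpl. auto. }
  set (JE := hdI (map snd E) (hdI (map snd B) (hdI (map snd R5) J0))).
  assert (Hreps : forall kk, chain (fcl f) (map snd (reps f a v n kk)) JE /\
     subI (hdI (map snd (reps f a v n kk)) JE) (H a v)).
  { induction kk as [|kk [IH1 IH2]]; simpl.
    - split; auto. unfold JE. rewrite Hs_E. apply subI_refl.
    - rewrite map_app. split.
      + apply chain_app; auto. apply chain_segN; auto. rewrite Hvu.
        eapply subI_trans; eauto.
      + rewrite hdI_app'. apply starts_segN. rewrite Hvu. eapply subI_trans; eauto. }
  assert (Hch_copy : forall J, subI J (H a u) -> chain (fcl f) (map snd copy1) J).
  { intros J HJ. unfold copy1. rewrite map_app. apply chain_app.
    - apply chain_segN; auto.
    - simpl. split.
      + eapply covers_mono. exact HJc. apply starts_segN.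
        change (f (iter f t1 v)) with (iter f (S t1) v).
        rewrite <- iter_add. replace (k + S t1)%nat with n by (unfold k; lia). rewrite Hvu. auto.
      + apply chain_segN; auto. change (f (iter f t1 v)) with (iter f (S t1) v). rewrite <- iter_add.
        replace (k + S t1)%nat with n by (unfold k; lia). rewrite Hvu. auto. }
  assert (Hchain : chain (fcl f) (map snd W) J0).
  { unfold W. rewrite !map_app. destruct (Hreps (m - 1)%nat) as [Hr1 Hr2].
    apply chain_app; [|apply chain_app; [|apply chain_app; [|apply chain_app]]];
      rewrite ?hdI_app'; auto.
    apply Hch_copy. fold JE. eapply subI_trans; eauto. }
  assert (Hvalid : Forall (valid a) W).
  { unfold W, copy1, R2, E, B, R5. repeat rewrite Forall_app. split; [split|split; [|split; [|split]]].
    - apply valid_segN; auto.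
    - constructor.
      + unfold valid; simpl. split; [apply Hva|]. split; [apply Hit|]. exact HJs.
      + apply valid_segN; auto. intros t. rewrite <- iter_add. auto.
    - clear -Hy Hv Hva. induction (m - 1)%nat; simpl; auto. apply Forall_app; split; auto.
      apply valid_segN; auto.
    - apply valid_segN; auto.
    - assert (Hvl : valid a (l, H a l)).
      { split; simpl; [lra|]. split; [lra|]. intros w hw; auto. }
      assert (Hvr : valid a (r, H a r)).
      { split; simpl; [lra|]. split; [lra|]. intros w hw; auto. }
      clear -Hvl Hvr. induction j; simpl; auto.
    - apply valid_segN; auto. }
  assert (Hfree : exists t, (t < length W)%nat /\ forall w, inI (snd (nth t W d0)) w -> w <> a).
  { exists t1. split.
    - unfold W. rewrite length_app. lia.
    - unfold W. rewrite app_nth1 by lia. unfold copy1. rewrite app_nth2 by (rewrite segN_len; lia).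
      rewrite segN_len, Nat.sub_diag. simpl. auto. }
  assert (HW : W <> nil).
  { intro E0. assert (HL : length W = 0%nat) by (rewrite E0; auto). unfold W in HL.
    rewrite length_app in HL. lia. }
  destruct (loop_orbit' f a Hy W d0 HW Hvalid Hchain HJ0n Hfree) as [y [d [Y1 [Y2 [Y3 Y4]]]]].
  exists y, d. split; auto. split; auto. split; auto. rewrite Y4. f_equal.
  - f_equal. rewrite Hhd. simpl fst.
    unfold W. rewrite !map_app, Hcopy_fst.
    rewrite !cntr_app.
    assert (HsdV : forall w, side a w = side a v -> cntr a (map fst (segN f a v n)) w = num_sc_aux f v n).
    { intros w hw. apply cntr_segN; auto. rewrite hw, Hvu. auto. }
    assert (Hr5hd : hd v (map fst R5) = r).
    { unfold R5. destruct e; simpl; auto. }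
    assert (Hbhd : hd v (map fst B ++ map fst R5) = l) by (unfold B; destruct j; auto).
    assert (HEhd : hd v (map fst E ++ map fst B ++ map fst R5) = v) by (unfold E; auto).
    assert (Hrepsc : forall kk X, hd v X = v ->
      cntr a (map fst (reps f a v n kk)) (hd v X) = (kk * num_sc_aux f v n)%nat /\
      hd v (map fst (reps f a v n kk) ++ X) = v).
    { intros kk X hX. induction kk as [|kk [IH1 IH2]]; simpl.
      - split; auto.
      - rewrite map_app, cntr_app. split.
        + rewrite HsdV, IH1; [lia|]. rewrite hX.
          replace (hd v (map fst (reps f a v n kk))) with v; auto.
          destruct kk; simpl; auto. rewrite map_app. destruct n; [lia|]. simpl. auto.
        + rewrite <- app_assoc, hd_app. destruct n; [lia|]. simpl. auto. }
    destruct (Hrepsc (m - 1)%nat (map fst E ++ map fst B ++ map fst R5) HEhd) as [C2 D2].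
    change (reps f a v n (m - 1)) with R2 in C2, D2.
    rewrite D2, HsdV by auto. rewrite C2.
    assert (CB : forall jj w, side a w = true -> cntr a (map fst (Bp a l r jj)) w = (2 * jj + 1)%nat).
    { intros jj w hw. induction jj; simpl.
      - rewrite hw. unfold side. destruct (Rlt_dec a l); [lra|]. auto.
      - unfold side at 1 2. destruct (Rlt_dec a l); [lra|]. destruct (Rlt_dec a r); [|lra].
        simpl. unfold side at 1. destruct (Rlt_dec a r); [|lra].
        replace (hd w (map fst (Bp a l r jj))) with l by (destruct jj; auto).
        unfold side. destruct (Rlt_dec a l); [lra|]. simpl. rewrite IHjj. lia. }
    rewrite Hbhd. unfold E. rewrite (cntr_segN f a Hy v (S t0) l Hv Hva (eq_sym Hsle)).
    rewrite Hr5hd. unfold B. rewrite CB.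
    2: { unfold side. destruct (Rlt_dec a r); auto; lra. }
    unfold R5. rewrite (cntr_segN f a Hy r e v Hr Hra).
    2: { rewrite He. auto. }
    replace (m * num_sc_aux f v n)%nat with (num_sc_aux f v n + (m - 1) * num_sc_aux f v n)%nat by nia.
    lia.
  - f_equal. f_equal. unfold W. rewrite !length_app, Hcopy_len. unfold R2, E, B, R5.
    rewrite reps_len, segN_len, Bp_len, segN_len. nia.
Qed.

Definition phin (f : R -> R) (a y : R) : nat :=
  if Rlt_dec a y then (if Rlt_dec (f y) a then 1%nat else 0%nat) else 0%nat.

Lemma phi_phin f a y : phi f a y = INR (phin f a y).
Proof. unfold phi, phin. destruct Rlt_dec; [destruct Rlt_dec|]; simpl; auto. Qed.

Fixpoint phisumN (f : R -> R) (a z : R) (n : nat) : nat :=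
  match n with O => O | S m => (phisumN f a z m + phin f a (iter f m z))%nat end.

Definition ind (b : bool) : R := if b then 1 else 0.

Lemma balance f a : Hyp f a -> forall z n, 0 <= z <= 1 -> (forall t, iter f t z <> a) ->
  INR (num_sc_aux f z n) + ind (side a z) = 2 * INR (phisumN f a z n) + ind (side a (iter f n z)).
Proof.
  intros Hy z n Hz Hav. pose proof Hy as [Hm [Hc [Ha [Hfa Hu]]]].
  induction n; simpl; [lra|].
  rewrite !plus_INR.
  assert (H01 : 0 <= iter f n z <= 1) by (apply (iter_in f a Hy); auto).
  rewrite (sc_side f a Hy (iter f n z) H01 (Hav n) (Hav (S n))).
  assert (step : INR (if Bool.eqb (side a (iter f n z)) (side a (f (iter f n z))) then 0%nat else 1%nat)
     + ind (side a (iter f n z)) = 2 * INR (phin f a (iter f n z)) + ind (side a (f (iter f n z)))).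
  { pose proof (Hav (S n)) as h. simpl in h. unfold side, phin, ind.
    destruct (Rlt_dec a (iter f n z)); destruct (Rlt_dec a (f (iter f n z)));
      destruct (Rlt_dec (f (iter f n z)) a); simpl; lra. }
  lra.
Qed.

Lemma exists_sc0 f z n : (num_sc_aux f z n < n)%nat -> exists t, (t < n)%nat /\ sign_change f (iter f t z) = 0%nat.
Proof.
  induction n; simpl; intros h; [lia|].
  destruct (Nat.eq_dec (sign_change f (iter f n z)) 0) as [e|e].
  - exists n; split; auto.
  - pose proof (sc_le1 f (iter f n z)). destruct IHn as [t [Ht Ht']]; [lia|]. exists t; split; auto.
Qed.

Lemma exists_phi f a z n : (1 <= phisumN f a z n)%nat -> exists t, (t < n)%nat /\ phin f a (iter f t z) = 1%nat.
Proof.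
  induction n; simpl; intros h; [lia|].
  destruct (Nat.eq_dec (phin f a (iter f n z)) 1) as [e|e].
  - exists n; split; auto.
  - assert (phin f a (iter f n z) = 0%nat) by (unfold phin in *; repeat destruct Rlt_dec; lia).
    destruct IHn as [t [Ht Ht']]; [lia|]. exists t; split; auto.
Qed.

Lemma sc0_same f a : Hyp f a -> forall w, 0 <= w <= 1 -> w <> a -> f w <> a ->
  sign_change f w = 0%nat -> side a w = side a (f w).
Proof.
  intros Hy w Hw h1 h2 h3. rewrite (sc_side f a Hy w Hw h1 h2) in h3.
  destruct (side a w), (side a (f w)); simpl in h3; auto; lia.
Qed.

Lemma noflip f a : Hyp f a -> forall z n, 0 <= z <= 1 -> (forall t, iter f t z <> a) ->
  num_sc_aux f z n = 0%nat -> forall t, (t <= n)%nat -> side a (iter f t z) = side a z.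
Proof.
  intros Hy z n Hz Hav H0. pose proof Hy as [Hm _].
  induction t; intros Ht; simpl; auto.
  rewrite <- IHt by lia. symmetry. apply (sc0_same f a Hy); auto.
  apply (iter_in f a Hy); auto. apply (Hav (S t)).
  assert (hle : (num_sc_aux f z (S t) <= num_sc_aux f z n)%nat).
  { replace n with (S t + (n - S t))%nat by lia. rewrite nsc_add. lia. }
  simpl in hle. lia.
Qed.

Lemma mono_left f a : Hyp f a -> forall z n, 0 <= z <= 1 ->
  (forall t, (t <= n)%nat -> iter f t z < a) -> (1 <= n)%nat -> iter f n z > z.
Proof.
  intros Hy z n Hz Hl Hn. induction n; [lia|].
  assert (h := side_left f a Hy (iter f n z) (iter_in f a Hy n z Hz) (Hl n ltac:(lia))).
  simpl. destruct n; simpl in *; [lra|].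
  assert (iter f (S n) z > z) by (apply IHn; [intros; apply Hl; lia | lia]). simpl in *. lra.
Qed.

Lemma mono_right f a : Hyp f a -> forall z n, 0 <= z <= 1 ->
  (forall t, (t <= n)%nat -> iter f t z > a) -> (1 <= n)%nat -> iter f n z < z.
Proof.
  intros Hy z n Hz Hl Hn. induction n; [lia|].
  assert (h := side_right f a Hy (iter f n z) (iter_in f a Hy n z Hz) (Hl n ltac:(lia))).
  simpl. destruct n; simpl in *; [lra|].
  assert (iter f (S n) z < z) by (apply IHn; [intros; apply Hl; lia | lia]). simpl in *. lra.
Qed.

Lemma fin_max (P : nat -> Prop) (g : nat -> R) N : (exists i, (i < N)%nat /\ P i) ->
  exists i, (i < N)%nat /\ P i /\ forall j, (j < N)%nat -> P j -> g j <= g i.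
Proof.
  induction N; intros [i [Hi Pi]]; [lia|].
  destruct (classic (exists i, (i < N)%nat /\ P i)) as [h|h].
  - destruct (IHN h) as [k [Hk [Pk Hmax]]].
    destruct (classic (P N)) as [pn|pn].
    + destruct (Rle_dec (g N) (g k)).
      * exists k. split; [lia|]. split; auto. intros j Hj Pj.
        destruct (Nat.eq_dec j N); [subst; auto|]. apply Hmax; auto; lia.
      * exists N. split; [lia|]. split; auto. intros j Hj Pj.
        destruct (Nat.eq_dec j N); [subst; lra|]. specialize (Hmax j ltac:(lia) Pj). lra.
    + exists k. split; [lia|]. split; auto. intros j Hj Pj.
      destruct (Nat.eq_dec j N); [subst; tauto|]. apply Hmax; auto; lia.
  - exists N. split; [lia|]. split.
    + destruct (Nat.eq_dec i N); [subst; auto|]. exfalso; apply h; exists i; split; auto; lia.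
    + intros j Hj Pj. destruct (Nat.eq_dec j N); [subst; lra|]. exfalso; apply h; exists j; split; auto; lia.
Qed.

Theorem lemma2p1 (f : R -> R) (a : R) (x : R) (p q : nat) (L : R -> R) :
  maps_unit f -> continuous_on_unit f ->
  0 <= a <= 1 -> f a = a -> (forall z, 0 <= z <= 1 -> f z = z -> z = a) ->
  0 <= x <= 1 -> periodic_pt f x q -> (2 <= q)%nat ->
  (2 * p)%nat = num_sc f x q ->
  is_code f a x q (INR p / INR q) L ->
  (exists u v, in_orbit f x q u /\ in_orbit f x q v /\ gt_a a u v /\ L u > L v) ->
  exists l k : nat, (1 <= k)%nat /\ (k < q)%nat /\ INR l / INR k < INR p / INR q /\
    (forall r, INR l / INR k <= r <= 1 / 2 -> in_orint f r).
Proof.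
  intros Hm Hc Ha Hfa Hu Hx Hp Hq H2p [Hc0 Hcode] [u [v [[iu [Hiu Eu]] [[iv [Hiv Ev]] [Hgt HL]]]]].
  assert (Hy : Hyp f a) by (unfold Hyp; tauto).
  destruct Hp as [Hq1 [Hxq Hxmin]].
  assert (Hxa : x <> a).
  { intro E. apply (Hxmin 1%nat); [lia|]. simpl. rewrite E; auto. }
  assert (Xav : forall i, iter f i x <> a) by (apply (avoid_a f a Hy x q); auto; lia).
  assert (X01 : forall i, 0 <= iter f i x <= 1) by (intros; apply (iter_in f a Hy); auto).
  assert (Xmod : forall i, iter f i x = iter f (i mod q) x).
  { intros i. rewrite (Nat.div_mod_eq i q) at 1. rewrite Nat.add_comm, iter_add.
    rewrite Nat.mul_comm, iter_mul; auto. }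
  assert (Xorb : forall i, in_orbit f x q (iter f i x)).
  { intros i. exists (i mod q). split; auto. apply Nat.mod_upper_bound; lia. }
  set (rho := INR p / INR q).
  assert (Hq0 : INR q > 0) by (apply lt_0_INR; lia).
  assert (Hcodeit : forall i t, L (iter f t (iter f i x)) =
      L (iter f i x) + INR t * rho - INR (phisumN f a (iter f i x) t)).
  { intros i t. induction t; [simpl; lra|].
    rewrite S_INR. cbn [iter phisumN].
    rewrite Hcode. rewrite IHt, phi_phin, plus_INR. unfold rho; lra.
    rewrite <- iter_add. apply Xorb. }
  assert (Hpq : (2 * p <= q)%nat) by (rewrite H2p; apply nsc_le).
  assert (Hrho : rho <= 1 / 2).
  { unfold rho. assert (Hh : INR (2 * p) <= INR q) by (apply le_INR; auto).
    rewrite mult_INR in Hh. simpl in Hh. apply div_le; lra. }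
  assert (Hrho0 : 0 <= rho) by (unfold rho; apply Rle_mult_inv_pos; [apply pos_INR|lra]).
  subst u v.
  set (v := iter f iv x) in *. set (u := iter f iu x) in *.
  assert (Vav : forall t, iter f t v <> a) by (intros; unfold v; rewrite <- iter_add; auto).
  assert (V01 : forall t, 0 <= iter f t v <= 1) by (intros; unfold v; rewrite <- iter_add; auto).
  assert (Huv : u <> v) by (intro E; unfold gt_a in Hgt; rewrite E in Hgt; lra).
  set (n := if Nat.leb iv iu then (iu - iv)%nat else (iu + q - iv)%nat).
  assert (Hvu : iter f n v = u).
  { unfold v, u, n. rewrite <- iter_add. destruct (Nat.leb_spec iv iu).
    - f_equal. lia.
    - replace (iu + q - iv + iv)%nat with (iu + 1 * q)%nat by lia.
      rewrite iter_add, iter_mul; auto. }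
  assert (Hn1 : (1 <= n)%nat).
  { unfold n. destruct (Nat.leb_spec iv iu); [|lia].
    destruct (Nat.eq_dec iu iv); [|lia]. subst. exfalso; apply Huv. auto. }
  assert (Hnq : (n < q)%nat) by (unfold n; destruct (Nat.leb_spec iv iu); lia).
  set (lc := phisumN f a v n).
  assert (HLc : L u = L v + INR n * rho - INR lc) by (rewrite <- Hvu; apply Hcodeit).
  assert (Hlc : INR lc < INR n * rho) by lra.
  assert (Hsd : side a u = side a v).
  { unfold side, gt_a in *. destruct (Rlt_dec a u); destruct (Rlt_dec a v); auto; lra. }
  assert (HSA : num_sc_aux f v n = (2 * lc)%nat).
  { pose proof (balance f a Hy v n (V01 0%nat) Vav) as B. rewrite Hvu, Hsd in B. fold lc in B.
    apply INR_eq. rewrite mult_INR. simpl (INR 2). lra. }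
  assert (H2lc : (2 * lc < n)%nat).
  { apply INR_lt. rewrite mult_INR. simpl (INR 2).
    assert (INR n * rho <= INR n * (1/2)) by (apply Rmult_le_compat_l; [apply pos_INR|lra]). lra. }
  destruct (exists_sc0 f v n) as [t1 [Ht1 Hsc1]]; [lia|].
  assert (Hside1 : side a (iter f t1 v) = side a (f (iter f t1 v))).
  { apply (sc0_same f a Hy); auto. apply (Vav (S t1)). }
  assert (Hlc1 : (1 <= lc)%nat).
  { destruct (Nat.eq_dec lc 0) as [e|e]; [|lia]. exfalso.
    assert (Hnf := noflip f a Hy v n (V01 0%nat) Vav ltac:(lia)).
    unfold gt_a in Hgt. destruct Hgt as [[h1 h2]|[h1 h2]].
    - assert (iter f n v > v).
      { apply (mono_left f a Hy); [exact (V01 0%nat)| |exact Hn1]. intros t Ht. specialize (Hnf t Ht).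
        unfold side in Hnf. simpl in Hnf. destruct (Rlt_dec a (iter f t v)); destruct (Rlt_dec a v); try lra; try discriminate.
        pose proof (Vav t). lra. }
      lra.
    - assert (iter f n v < v).
      { apply (mono_right f a Hy); [exact (V01 0%nat)| |exact Hn1]. intros t Ht. specialize (Hnf t Ht).
        unfold side in Hnf. simpl in Hnf. destruct (Rlt_dec a (iter f t v)); destruct (Rlt_dec a v); try lra; try discriminate. }
      lra. }
  destruct (exists_phi f a v n Hlc1) as [t0 [Ht0 Hphi0]].
  assert (Ht0a : a < iter f t0 v /\ f (iter f t0 v) < a).
  { unfold phin in Hphi0. destruct Rlt_dec; [destruct Rlt_dec|]; try discriminate. auto. }
  destruct (fin_max (fun i => iter f i x < a) (fun i => iter f i x) q) as [il [Hil [Hla Hlmax]]].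
  { exists ((S t0 + iv) mod q)%nat. split; [apply Nat.mod_upper_bound; lia|].
    rewrite <- Xmod. rewrite iter_add. fold v. simpl. lra. }
  destruct (fin_max (fun i => a < iter f i x) (fun i => - iter f i x) q) as [ir [Hir [Hra Hrmin]]].
  { exists ((t0 + iv) mod q)%nat. split; [apply Nat.mod_upper_bound; lia|].
    rewrite <- Xmod. rewrite iter_add. fold v. lra. }
  set (l := iter f il x) in *. set (r := iter f ir x) in *.
  assert (Lmax : forall i, iter f i x < a -> iter f i x <= l).
  { intros i h. rewrite (Xmod i) in h |- *. apply Hlmax; auto. apply Nat.mod_upper_bound; lia. }
  assert (Rmin' : forall i, a < iter f i x -> r <= iter f i x).
  { intros i h. rewrite (Xmod i) in h |- *. assert (- iter f (i mod q) x <= - r).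
    { apply (Hrmin (i mod q)%nat); auto. apply Nat.mod_upper_bound; lia. } lra. }
  assert (Hfl : a < f l /\ r <= f l).
  { assert (E : f l = iter f (S il) x) by auto.
    assert (f l > l) by (apply (side_left f a Hy); [apply X01|exact Hla]).
    assert (a < f l).
    { destruct (Rlt_dec a (f l)); auto. exfalso. pose proof (Xav (S il)) as HX. rewrite <- E in HX.
      assert (f l <= l) by (rewrite E; apply Lmax; rewrite <- E; lra). lra. }
    split; auto. rewrite E. apply Rmin'. rewrite <- E; auto. }
  assert (Hfr : f r < a /\ f r <= l).
  { assert (E : f r = iter f (S ir) x) by auto.
    assert (f r < r) by (apply (side_right f a Hy); [apply X01|exact Hra]).
    assert (f r < a).
    { destruct (Rlt_dec (f r) a); auto. exfalso. pose proof (Xav (S ir)) as HX. rewrite <- E in HX.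
      assert (r <= f r) by (rewrite E; apply Rmin'; rewrite <- E; lra). lra. }
    split; auto. rewrite E. apply Lmax. rewrite <- E; auto. }
  assert (Clr : covers (fcl f) (H a l) (H a r)).
  { eapply covers_mono. apply (F1 f a Hy l (X01 il)). apply H_mono. right; lra. }
  assert (Crl : covers (fcl f) (H a r) (H a l)).
  { eapply covers_mono. apply (F1 f a Hy r (X01 ir)). apply H_mono. left; lra. }
  assert (HS0 : iter f (S t0) v < a) by (simpl; lra).
  assert (HS0l : iter f (S t0) v <= l) by (unfold v; rewrite <- iter_add; apply Lmax; rewrite iter_add; auto).
  assert (Hle : subI (H a l) (H a (iter f (S t0) v))) by (apply H_mono; left; lra).
  assert (Hsle : side a (iter f (S t0) v) = side a l).
  { unfold side. destruct (Rlt_dec a (iter f (S t0) v)); destruct (Rlt_dec a l); auto; lra. }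
  set (e := (q - ir + iv)%nat).
  assert (He : iter f e r = v).
  { unfold r, e, v. rewrite <- iter_add. replace (q - ir + iv + ir)%nat with (iv + 1 * q)%nat by lia.
    rewrite iter_add, iter_mul; auto. }
  assert (Rav : forall t, iter f t r <> a) by (intros; unfold r; rewrite <- iter_add; auto).
  assert (R01 : forall t, 0 <= iter f t r <= 1) by (intros; unfold r; rewrite <- iter_add; auto).
  assert (Hsub : subI (H a v) (H a u)).
  { apply H_mono. unfold gt_a in Hgt. lra. }
  set (z1 := iter f t1 v).
  assert (Hz1a : z1 <> a) by apply Vav.
  assert (Hfz1 : f z1 = iter f (S t1) v) by auto.
  assert (HJ : exists Jf, subI Jf (H a z1) /\ covers (fcl f) Jf (H a (f z1)) /\
     (forall w, inI Jf w -> w <> a) /\ fst Jf <= snd Jf).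
  { destruct (Rlt_dec z1 a) as [hz|hz].
    - assert (Hfz1a : f z1 < a).
      { unfold side in Hside1. fold z1 in Hside1. destruct (Rlt_dec a z1); [lra|].
        destruct (Rlt_dec a (f z1)); [discriminate|]. pose proof (Vav (S t1)) as HV. rewrite <- Hfz1 in HV. lra. }
      assert (Hz1l : z1 <= l) by (unfold z1, v; rewrite <- iter_add; apply Lmax; rewrite iter_add; auto).
      exists (z1, l). split; [|split; [|split]]; simpl.
      + intros w hw. unfold inI, H in *; simpl in *. unfold Rmin, Rmax. destruct Rle_dec; lra.
      + intros w hw. unfold inI, H in hw; simpl in hw. unfold Rmin, Rmax in hw. destruct Rle_dec in hw; [|lra].
        destruct (ivt2 (fcl f) (fcl_cont f Hc) z1 l w) as [y [hy1 hy2]].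
        * unfold btw. rewrite (fcl_eq f z1 (V01 t1)), (fcl_eq f l (X01 il)).
          unfold Rmin, Rmax. destruct Rle_dec; lra.
        * exists y. split; auto. unfold inI, btw in *; simpl. unfold Rmin, Rmax in hy1. destruct Rle_dec in hy1; lra.
      + intros w hw. unfold inI in hw; simpl in hw. lra.
      + auto.
    - assert (hz' : a < z1) by (destruct (Rlt_dec a z1); auto; lra).
      assert (Hfz1a : a < f z1).
      { unfold side in Hside1. fold z1 in Hside1. destruct (Rlt_dec a z1); [|lra].
        destruct (Rlt_dec a (f z1)); [auto|discriminate]. }
      assert (Hz1r : r <= z1) by (unfold z1, v; rewrite <- iter_add; apply Rmin'; rewrite iter_add; auto).
      exists (r, z1). split; [|split; [|split]]; simpl.
      + intros w hw. unfold inI, H in *; simpl in *. unfold Rmin, Rmax. destruct Rle_dec; lra.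
      + intros w hw. unfold inI, H in hw; simpl in hw. unfold Rmin, Rmax in hw. destruct Rle_dec in hw; [lra|].
        destruct (ivt2 (fcl f) (fcl_cont f Hc) r z1 w) as [y [hy1 hy2]].
        * unfold btw. rewrite (fcl_eq f z1 (V01 t1)), (fcl_eq f r (X01 ir)).
          unfold Rmin, Rmax. destruct Rle_dec; lra.
        * exists y. split; auto. unfold inI, btw in *; simpl. unfold Rmin, Rmax in hy1. destruct Rle_dec in hy1; lra.
      + intros w hw. unfold inI in hw; simpl in hw. lra.
      + auto. }
  destruct HJ as [Jf [HJs [HJc [HJf HJn]]]].
  pose proof (construct f a v u r l z1 n t1 t0 e Jf Hy (V01 0%nat) Vav (R01 0%nat) Rav (X01 il) Hla Hra
    Hvu Hsub Hsd Hn1 Ht1 Ht0 Clr Crl Hle Hsle He eq_refl HJs HJc HJf HJn) as Hcons.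
  set (C1 := (num_sc_aux f v (S t0) + 1 + num_sc_aux f r e)%nat).
  set (N0 := (S t0 + 1 + e)%nat).
  exists lc, n. split; auto. split; auto. split.
  - assert (INR n > 0) by (apply lt_0_INR; lia).
    apply (Rmult_lt_reg_r (INR n)); auto. unfold Rdiv. rewrite Rmult_assoc, Rinv_l by lra.
    fold rho. lra.
  - intros r0 Hr0 eps Heps.
    destruct (density lc n C1 N0 Hn1 ltac:(lia)) with (r := r0) (eps := eps) as [m [j [Hm1 Hclose]]]; auto.
    { unfold C1, N0. pose proof (nsc_le f v (S t0)). pose proof (nsc_le f r e). lia. }
    destruct (Hcons m j Hm1) as [y [d [Y1 [Y2 [Y3 Y4]]]]].
    exists y, d. split; auto. split; auto. split; auto.
    replace (orn f y d) with (Rmj lc n C1 N0 m j); auto.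
    rewrite Y4. unfold Rmj. rewrite HSA.
    replace (m * (2 * lc) + num_sc_aux f v (S t0) + (2 * j + 1) + num_sc_aux f r e)%nat
      with (2 * m * lc + 2 * j + C1)%nat by (unfold C1; lia).
    replace (m * n + S t0 + (2 * j + 1) + e)%nat with (m * n + 2 * j + N0)%nat by (unfold N0; lia).
    rewrite !plus_INR, !mult_INR. simpl (INR 2). auto.
Qed.
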